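(* Let $\mathcal{G}=\langle S,A,T,s_0,F\rangle$ be a two-player turn-based deterministic reachability game, let $s_1,s_2\in\mathrm{Win}_2(\mathcal{G},F)\setminus F$, and set $Y_1=\{s_1\}$, $Y_2=\{s_2\}$, $Y=Y_1\cup Y_2$. Then $\mathrm{DSWin}_1(\emptyset,Y)$ equals P1's sure winning region in the turn-based game with state set $\mathrm{Win}_2(\mathcal{G}^2_{\emptyset,Y},F)$ and transition function $\widehat T_{\emptyset,Y}$, in which P1's goal is to reach the target set $\mathrm{DSWin}_1(\emptyset,Y_1)\cup\mathrm{DSWin}_1(\emptyset,Y_2)$ and P2's goal is to prevent P1 from reaching it.
   Context: A two-player turn-based deterministic reachability game is a tuple $\mathcal{G}=\langle S,A,T,s_0,F\rangle$: $S$ finite, partitioned into P1 states $S_1$ and P2 states $S_2$; $A=A_1\cup A_2$ (P1 and P2 actions); $T:(S_1\times A_1)\cup(S_2\times A_2)\to S$ deterministic, possibly partial ($a$ enabled at $s$ iff $T(s,a)$ defined; every state has an enabled action); $s_0$ initial; $F\subseteq S$ a set of sink states (P2's goal). For a target $R\subseteq S$: $Z_0=R$, $Z_{k+1}=Z_k\cup\{s\in S_1:T(s,a)\in Z_k\ \forall\text{ enabled }a\}\cup\{s\in S_2:T(s,a)\in Z_k\text{ for some enabled }a\}$; $\mathrm{Win}_2(\mathcal{G},R)=\bigcup_kZ_k$; $\mathrm{rank}_{\mathcal{G},R}(s)=\min\{k:s\in Z_k\}$ ($\infty$ if none). For disjoint $X,Y\subseteq\mathrm{Win}_2(\mathcal{G},F)\setminus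 F$ (traps $X$, fake targets $Y$): the true game $\mathcal{G}^1_{X,Y}$ has states $S$, transitions $T_{X,Y}(q,a)=T(q,a)$ if $q\notin X\cup Y$ and $T_{X,Y}(q,a)=q$ if $q\in X\cup Y$; P2's perceptual game $\mathcal{G}^2_{X,Y}$ has transitions $T$ and goal $F\cup Y$, with $\mathrm{rank}_{\mathcal{G}^2_{X,Y}}:=\mathrm{rank}_{\mathcal{G},F\cup Y}$; $\mathrm{Win}_2(\mathcal{G}^2_{X,Y},F)$ is P2's winning region for target $F$ computed with transitions $T$. Subjectively rationalizable actions: for $q\in S_2\cap\mathrm{Win}_2(\mathcal{G},F)\setminus(F\cup Y)$, $\mathsf{SRActs}_{X,Y}(q)=\{a\text{ enabled}:\mathrm{rank}_{\mathcal{G}^2_{X,Y}}(T(q,a))<\mathrm{rank}_{\mathcal{G}^2_{X,Y}}(q)\}$; at every other state, all enabled actions. $\widehat T_{X,Y}(q,a)=T(q,a)$ if $a\in\mathsf{SRActs}_{X,Y}(q)$, undefined otherwise. A memoryless deterministic strategy of either player is subjectively rationalizable if it picks an action in $\mathsf{SRActs}_{X,Y}(q)$ at each of that player's states $q$. A memoryless deterministic P1 strategy $\pi_1$ is stealthy deceptive sure winning at $s$ if it is subjectively rationalizable and, for every subjectively rationalizable memoryless deterministic P2 strategy $\pi_2$, every path from $s$ generated by $(\pi_1,\pi_2)$ in the true game $\mathcal{G}^1_{X,Y}$ visits $X\cup Y$ within finitely many steps; $\mathrm{DSWin}_1(X,Y)$ is the set of states at which such a strategy exists. P1's sure winning region for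 a target $R'$ in a turn-based game is the set of states from which P1 has a strategy guaranteeing, against every P2 strategy, that every path visits $R'$ within finitely many steps.
   Formalization: P1's sure winning region in the game on $\mathrm{Win}_2(\mathcal{G}^2_{\emptyset,Y},F)$ equals $\mathrm{DSWin}_1(\emptyset,Y)\cap\mathrm{Win}_2(\mathcal{G},F)$ rather than $\mathrm{DSWin}_1(\emptyset,Y)$ itself. The statement above fails without it. *)

(* Defs.v *)
From mathcomp Require Import all_boot.
From Stdlib Require Import ClassicalEpsilon.

Set Implicit Arguments.
Unset Strict Implicit.
Unset Printing Implicit Defensive.

Section Game.
(* A turn-based deterministic game: states S (finite), actions A (finite),
   P1 = the set S_1 of player-1 states (S_2 = its complement),
   T : partial deterministic transition function (None = not enabled). *)
Variables (S A : finType) (P1 : {set S}) (T : S -> A -> option S).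

Definition enabled (s : S) (a : A) : bool := T s a != None.

Definition succ_in (Z : {set S}) (s : S) (a : A) : bool :=
  if T s a is Some t then t \in Z else false.

Definition cpre2 (Z : {set S}) : {set S} :=
  [set s | if s \in P1 then [forall a, enabled s a ==> succ_in Z s a]
           else [exists a, succ_in Z s a]].

Fixpoint Zk (R : {set S}) (k : nat) : {set S} :=
  if k is k'.+1 then Zk R k' :|: cpre2 (Zk R k') else R.

Definition Win2 (R : {set S}) (s : S) : Prop := exists k, s \in Zk R k.

(* rank_{G,R}(s) = min {k | s \in Z_k}, None standing for infinity *)
Definition rank (R : {set S}) (s : S) : option nat :=
  match excluded_middle_informative (exists k, s \in Zk R k) with
  | left H => Some (@ex_minn (fun k => s \in Zk R k) H)
  | right _ => None
  end.

Definition rank_lt (x y : option nat) : bool :=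
  match x, y with
  | Some m, Some n => m < n
  | Some _, None => true
  | None, _ => false
  end.

(* a \in SRActs_{X,Y}(q)  (independent of X); F = P2's goal *)
Definition SRActs (F Y : {set S}) (q : S) (a : A) : Prop :=
  enabled q a /\
  ((q \notin P1 /\ Win2 F q /\ q \notin F :|: Y) ->
   match T q a with
   | Some t => rank_lt (rank (F :|: Y) t) (rank (F :|: Y) q)
   | None => false
   end).

(* \hat T_{X,Y} as a transition relation: hatT q a t <-> \hat T(q,a) = t *)
Definition hatT (F Y : {set S}) (q : S) (a : A) (t : S) : Prop :=
  SRActs F Y q a /\ T q a = Some t.

Definition T1 (X Y : {set S}) (q : S) (a : A) : option S :=
  if q \in X :|: Y then (if T q a is Some _ then Some q else None) else T q a.

Definition DSWin (F X Y : {set S}) (s : S) : Prop :=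
  exists pi1 : S -> A,
    (forall q, q \in P1 -> SRActs F Y q (pi1 q)) /\
    forall pi2 : S -> A,
      (forall q, q \notin P1 -> SRActs F Y q (pi2 q)) ->
      forall p : nat -> S,
        p 0 = s ->
        (forall i, T1 X Y (p i)
                      (if p i \in P1 then pi1 (p i) else pi2 (p i))
                   = Some (p i.+1)) ->
        exists i, p i \in X :|: Y.

(* Strategies may depend on the history:
   sigma past q = action chosen at current state q after the states past. *)
Definition legal (St : S -> Prop) (Tr : S -> A -> S -> Prop)
    (own : S -> bool) (sigma : seq S -> S -> A) : Prop :=
  forall past q, St q -> own q -> exists q', Tr q (sigma past q) q' /\ St q'.

Definition SureWin1 (St : S -> Prop) (Tr : S -> A -> S -> Prop)
    (R' : S -> Prop) (s : S) : Prop :=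
  St s /\
  exists sigma1 : seq S -> S -> A,
    legal St Tr (fun q => q \in P1) sigma1 /\
    forall sigma2 : seq S -> S -> A,
      legal St Tr (fun q => q \notin P1) sigma2 ->
      forall p : nat -> S,
        p 0 = s ->
        (forall i,
           let past := [seq p j | j <- iota 0 i] in
           Tr (p i) (if p i \in P1 then sigma1 past (p i) else sigma2 past (p i))
              (p i.+1) /\ St (p i.+1)) ->
        exists i, R' (p i).

End Game.

(* Main.v *)
Require Import Defs.
From mathcomp Require Import all_boot.
From Stdlib Require Import ClassicalEpsilon.
Set Implicit Arguments. Unset Strict Implicit. Unset Printing Implicit Defensive.

Section Pf.
Variables (S A : finType) (P1 : {set S}) (T : S -> A -> option S) (F : {set S}).
Hypothesis Henabled : forall s, exists a, T s a <> None.
Hypothesis Hsink : forall f a t, f \in F -> T f a = Some t -> t = f.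
Variable a0 : A.
Implicit Types (Y : {set S}).

Local Notation Z := (Zk P1 T).
Local Notation W := (Win2 P1 T F).
Local Notation rk := (rank P1 T).

Lemma cpre2_mono (X X' : {set S}) : X \subset X' -> cpre2 P1 T X \subset cpre2 P1 T X'.
Proof.
move=> /subsetP sub; apply/subsetP => x; rewrite !inE.
case: (x \in P1).
- move=> /forallP H; apply/forallP => a; move: (H a); rewrite /succ_in.
  case: (T x a) => // t /implyP H1; apply/implyP => /H1; exact: sub.
- move=> /existsP [a]; rewrite /succ_in; case E: (T x a) => [t|] // Ht.
  by apply/existsP; exists a; rewrite E; apply: sub.
Qed.

Lemma Z_monoR (R R' : {set S}) k : R \subset R' -> Z R k \subset Z R' k.
Proof.
move=> H; elim: k => //= k IH; apply: setUSS => //; exact: cpre2_mono.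
Qed.

Lemma Z_monok (R : {set S}) m n : m <= n -> Z R m \subset Z R n.
Proof.
move=> /subnKC <-; elim: (n - m) => [|d IH]; first by rewrite addn0.
rewrite addnS /=; apply: subset_trans IH _; exact: subsetUl.
Qed.

Lemma Z_shift (R R0 : {set S}) K n : R \subset Z R0 K -> Z R n \subset Z R0 (K + n).
Proof.
move=> H; elim: n => [|n IH]; first by rewrite addn0.
rewrite addnS /=; apply: setUSS => //; exact: cpre2_mono.
Qed.

Lemma rankP (R : {set S}) x n : rk R x = Some n <-> (x \in Z R n /\ forall m, x \in Z R m -> n <= m).
Proof.
rewrite /rank; case: excluded_middle_informative => [H|H].
- case: ex_minnP => m Hm Hmin; split.
  + by case=> <-; split.
  + case=> Hn Hn2; congr Some; apply/eqP; rewrite eqn_leq Hmin // Hn2 //.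
- split => //; case=> Hn _; exfalso; apply: H; by exists n.
Qed.

Lemma rank_of (R : {set S}) x k : x \in Z R k -> exists2 n, rk R x = Some n & n <= k.
Proof.
move=> Hx; have Hex : exists k, x \in Z R k by exists k.
rewrite /rank; case: excluded_middle_informative => [H|//].
case: ex_minnP => m Hm Hmin; exists m => //; exact: Hmin.
Qed.

Lemma Z0 (R : {set S}) : Z R 0 = R. Proof. by []. Qed.

Lemma rank_pos (R : {set S}) x n : rk R x = Some n -> x \notin R ->
  exists n', n = n'.+1 /\ x \in cpre2 P1 T (Z R n') /\ x \notin Z R n'.
Proof.
case/rankP=> Hx Hmin HR; case: n Hx Hmin => [|n'] Hx Hmin; first by rewrite Hx in HR.
have Hn' : x \notin Z R n'.
  by apply/negP => /Hmin; rewrite ltnn.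
exists n'; split => //; split => //.
by move: Hx => /= /setUP [H|//]; rewrite H in Hn'.
Qed.

Lemma P1_step (R : {set S}) x n a t : x \in P1 -> rk R x = Some n -> x \notin R -> T x a = Some t ->
  exists2 m, rk R t = Some m & m < n.
Proof.
move=> HP Hr HR HT; case: (rank_pos Hr HR) => n' [-> [Hc _]].
move: Hc; rewrite inE HP => /forallP /(_ a); rewrite /enabled /succ_in HT /= => Ht.
by case: (rank_of Ht) => m Hm Hle; exists m.
Qed.

Lemma P2_step (R : {set S}) x n : x \notin P1 -> rk R x = Some n -> x \notin R ->
  exists a t, T x a = Some t /\ exists2 m, rk R t = Some m & m < n.
Proof.
move=> HP Hr HR; case: (rank_pos Hr HR) => n' [-> [Hc _]].
move: Hc; rewrite inE (negbTE HP) => /existsP [a]; rewrite /succ_in.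
case E: (T x a) => [t|] // Ht; exists a, t; split => //.
by case: (rank_of Ht) => m Hm Hle; exists m.
Qed.

Lemma W_rank (R : {set S}) x : F \subset R -> W x -> exists n, rk R x = Some n.
Proof.
move=> HF [k Hk]; have : x \in Z R k by apply: (subsetP (Z_monoR k HF)).
by case/rank_of => n Hn _; exists n.
Qed.

Lemma rank_W (R : {set S}) K x m : R \subset Z F K -> rk R x = Some m -> W x.
Proof.
move=> H /rankP [Hx _]; exists (K + m); exact: (subsetP (Z_shift m H)).
Qed.

Lemma P1_succW x a t : x \in P1 -> W x -> T x a = Some t -> W t.
Proof.
move=> HP HW HT; case: (boolP (x \in F)) => HxF.
  by rewrite (Hsink HxF HT).
case: (W_rank (subxx F) HW) => n Hn.
case: (P1_step HP Hn HxF HT) => m Hm _.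
exact: (@rank_W F 0 t m (subxx _)).
Qed.


Definition choose_act (P : A -> Prop) (d : A) : A :=
  match excluded_middle_informative (exists a, P a) with
  | left H => proj1_sig (constructive_indefinite_description _ H)
  | right _ => d end.

Lemma choose_actP (P : A -> Prop) d : (exists a, P a) -> P (choose_act P d).
Proof.
rewrite /choose_act; case: excluded_middle_informative => // H _.
exact: proj2_sig (constructive_indefinite_description _ H).
Qed.

Lemma choose_act_cases (P : A -> Prop) d : P (choose_act P d) \/ choose_act P d = d.
Proof.
rewrite /choose_act; case: excluded_middle_informative => H; last by right.
left; exact: proj2_sig (constructive_indefinite_description _ H).
Qed.

Definition dflt q := choose_act (fun a => T q a <> None) a0.
Lemma dfltP q : T q (dflt q) <> None.
Proof. exact: (choose_actP (P := fun a => T q a <> None) a0 (Henabled q)). Qed.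

Lemma SR_P1 Y q a : q \in P1 -> T q a <> None -> SRActs P1 T F Y q a.
Proof.
move=> HP Ha; split; first by rewrite /enabled; apply/eqP.
by case; rewrite HP.
Qed.

Lemma SR_dec Y x a t n : x \notin P1 -> x \notin F :|: Y -> W x -> rk (F :|: Y) x = Some n ->
  SRActs P1 T F Y x a -> T x a = Some t -> exists2 m, rk (F :|: Y) t = Some m & m < n.
Proof.
move=> HP HY HW Hn [_ H] HT; move: (H (conj HP (conj HW HY))); rewrite HT Hn.
by case: (rk _ t) => // m Hm; exists m.
Qed.

Lemma SR_exists Y q : exists a, SRActs P1 T F Y q a.
Proof.
case: (classic (q \notin P1 /\ W q /\ q \notin F :|: Y)) => [[HP [HW HY]]|Hn].
- case: (@W_rank (F :|: Y) q (subsetUl _ _) HW) => n Hn.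
  case: (P2_step HP Hn HY) => a [t [HT [m Hm Hlt]]].
  exists a; split; first by rewrite /enabled HT.
  by move=> _; rewrite HT Hm Hn.
- case: (Henabled q) => a Ha; exists a; split; first by rewrite /enabled; apply/eqP.
  by move=> H; exfalso; apply: Hn.
Qed.

Inductive good (Y : {set S}) : S -> Prop :=
| gY x : x \in Y -> good Y x
| gP1 x a t : x \in P1 -> x \notin F -> T x a = Some t -> good Y t -> good Y x
| gP2 x : x \notin P1 -> x \notin F ->
    (forall a t, SRActs P1 T F Y x a -> T x a = Some t -> good Y t) -> good Y x.

Lemma good_inv Y x : good Y x -> x \notin Y -> x \notin F /\
  (x \in P1 -> exists a t, T x a = Some t /\ good Y t) /\
  (x \notin P1 -> forall a t, SRActs P1 T F Y x a -> T x a = Some t -> good Y t).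
Proof.
case=> {x} [x Hx|x a t HP HF HT Hg|x HP HF H] Hn; first by rewrite Hx in Hn.
- split => //; split; first by move=> _; exists a, t.
  by rewrite HP.
- split => //; split => //; by move=> H'; rewrite H' in HP.
Qed.

Definition pig Y q := choose_act (fun a => exists t, T q a = Some t /\ good Y t) (dflt q).

Lemma pig_en Y q : T q (pig Y q) <> None.
Proof.
rewrite /pig; case: (choose_act_cases (fun a => exists t, T q a = Some t /\ good Y t) (dflt q)).
- by case=> t [-> _].
- move=> ->; exact: dfltP.
Qed.

Lemma pig_good Y q : q \in P1 -> good Y q -> q \notin Y ->
  exists t, T q (pig Y q) = Some t /\ good Y t.
Proof.
move=> HP Hg HY; case: (good_inv Hg HY) => _ [H _].
case: (H HP) => a [t [HT Ht]]; apply: (choose_actP (P := fun a => exists t, T q a = Some t /\ good Y t)).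
by exists a, t.
Qed.

Lemma FY_sub (Y : {set S}) K : Y \subset Z F K -> F :|: Y \subset Z F K.
Proof. by move=> H; rewrite subUset H andbT; exact: (Z_monok F (leq0n K)). Qed.

Lemma reach Y K n (p : nat -> S) : Y \subset Z F K ->
  (forall i, p i \notin Y ->
     (p i \in P1 -> T (p i) (pig Y (p i)) = Some (p i.+1)) /\
     (p i \notin P1 -> exists a, SRActs P1 T F Y (p i) a /\ T (p i) a = Some (p i.+1))) ->
  W (p 0) -> good Y (p 0) -> (exists2 m, rk (F :|: Y) (p 0) = Some m & m <= n) ->
  exists i, p i \in Y.
Proof.
move=> HYK; elim: n p => [|n IH] p Hstep HW Hg [m Hm Hle].
all: case: (boolP (p 0 \in Y)) => HY0; first by exists 0.
all: case: (good_inv Hg HY0) => HF [H1 H2].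
all: have HFY : p 0 \notin F :|: Y by rewrite inE negb_or HF HY0.
all: have [a [Ha [m' Hm' Hlt]]] : exists a, T (p 0) a = Some (p 1) /\ exists2 m', rk (F :|: Y) (p 1) = Some m' & m' < m.
all: try (case: (boolP (p 0 \in P1)) => HP;
  [ have HT := (proj1 (Hstep 0 HY0) HP); exists (pig Y (p 0)); split => //;
    exact: (P1_step HP Hm HFY HT)
  | case: (proj2 (Hstep 0 HY0) HP) => a [HSR HT]; exists a; split => //;
    exact: (SR_dec HP HFY HW Hm HSR HT) ]).
- by move: Hle Hlt; rewrite leqn0 => /eqP ->.
- have Hg1 : good Y (p 1).
    case: (boolP (p 0 \in P1)) => HP.
    + case: (pig_good HP Hg HY0) => t [HT Ht]; by rewrite (proj1 (Hstep 0 HY0) HP) in HT; case: HT => ->.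
    + case: (proj2 (Hstep 0 HY0) HP) => b [HSR HT]; exact: (H2 HP _ _ HSR HT).
  have HW1 : W (p 1) by apply: (rank_W (FY_sub HYK) Hm').
  case: (IH (fun i => p i.+1)) => //.
  + by move=> i; exact: Hstep.
  + by exists m' => //; rewrite -ltnS; apply: leq_trans Hlt Hle.
  + by move=> i Hi; exists i.+1.
Qed.


Lemma good_DS Y K s : Y \subset Z F K -> good Y s -> W s -> DSWin P1 T F set0 Y s.
Proof.
move=> HYK Hg HW; exists (pig Y); split.
  by move=> q HP; apply: SR_P1 => //; exact: pig_en.
move=> pi2 Hpi2 p Hp0 Hstep.
case: (W_rank (subsetUl F Y) HW) => m Hm.
have [i Hi] : exists i, p i \in Y.
  apply: (@reach Y K m p HYK); rewrite ?Hp0 //; last by exists m.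
  move=> i Hi; have := Hstep i; rewrite /T1 inE in_set0 (negbTE Hi) /=.
  split => HP.
  - by move: H; rewrite HP.
  - move: H; rewrite (negbTE HP) => H; exists (pi2 (p i)); split => //; exact: Hpi2.
by exists i; rewrite inE Hi orbT.
Qed.

Lemma DS_good Y s : DSWin P1 T F set0 Y s -> good Y s.
Proof.
case=> pi1 [Hpi1 Hwin]; apply: NNPP => Hng.
pose Q q a := SRActs P1 T F Y q a /\ exists t, T q a = Some t /\ ~ good Y t.
pose pi2 q := choose_act (Q q) (choose_act (SRActs P1 T F Y q) a0).
have Hpi2 : forall q, SRActs P1 T F Y q (pi2 q).
  move=> q; rewrite /pi2; case: (choose_act_cases (Q q) (choose_act (SRActs P1 T F Y q) a0)).
  - by case.
  - move=> ->; apply: choose_actP; exact: SR_exists.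
pose act q := if q \in P1 then pi1 q else pi2 q.
have Hact : forall q, T q (act q) <> None.
  move=> q; rewrite /act; case: ifP => HP.
  - by case: (Hpi1 q HP) => /eqP.
  - by case: (Hpi2 q) => /eqP.
pose next q := if T q (act q) is Some t then t else q.
have Hnext : forall q, ~ good Y q -> T q (act q) = Some (next q) /\ ~ good Y (next q).
  move=> q Hq; rewrite /next; case E: (T q (act q)) => [t|]; last by exfalso; exact: Hact E.
  split => //.
  case: (boolP (q \in F)) => HF; first by rewrite (Hsink HF E).
  case: (boolP (q \in P1)) => HP.
  - move=> Ht; apply: Hq; move: E; rewrite /act HP => E; exact: gP1 HP HF E Ht.
  - have : exists a, Q q a.
      apply: NNPP => Hne; apply: Hq; apply: gP2 => // a u HSR HT; apply: NNPP => Hu.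
      by apply: Hne; exists a; split => //; exists u.
    move=> /(choose_actP (choose_act (SRActs P1 T F Y q) a0)) [_ [u [Hu Hgu]]].
    move: E; rewrite /act (negbTE HP) -/(pi2 q) Hu; by case=> <-.
pose p i := iter i next s.
have Hinv : forall i, ~ good Y (p i).
  by elim=> [|i IH] //=; exact: (Hnext _ IH).2.
have Hnot : forall i, p i \notin Y by move=> i; apply/negP => H; apply: (Hinv i); exact: gY.
case: (Hwin pi2 (fun q _ => Hpi2 q) p erefl).
- move=> i; rewrite /T1 inE in_set0 (negbTE (Hnot i)) /=.
  exact: (Hnext _ (Hinv i)).1.
- move=> i; rewrite inE in_set0 /= => H; by move: (Hnot i); rewrite H.
Qed.

Lemma Y_DS Y y : y \in Y -> DSWin P1 T F set0 Y y.
Proof.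
move=> Hy; exists dflt; split; first by move=> q HP; apply: SR_P1 => //; exact: dfltP.
by move=> pi2 _ p Hp0 _; exists 0; rewrite Hp0 inE Hy orbT.
Qed.

Lemma notgood_P2 Y q : ~ good Y q -> q \notin P1 -> q \notin F ->
  exists a u, SRActs P1 T F Y q a /\ T q a = Some u /\ ~ good Y u.
Proof.
move=> Hq HP HF; apply: NNPP => Hne; apply: Hq; apply: gP2 => // a u HSR HT.
by apply: NNPP => Hu; apply: Hne; exists a, u.
Qed.

Lemma NG Y K n t : Y \subset Z F K -> t \in Z (F :|: Y) n -> ~ good Y t -> t \in Z F n.
Proof.
move=> HYK; elim: n t => [|n IH] t Ht Hg.
  move: Ht; rewrite /= inE => /orP [//|HY]; by exfalso; apply: Hg; apply: gY.
have Htz := Ht.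
case: (boolP (t \in Z (F :|: Y) n)) => Htn; first by apply/setUP; left; exact: IH.
move: Ht => /= /setUP [Ht|Ht]; first by rewrite Ht in Htn.
have HtF : t \notin F.
  apply/negP => HF; move/negP: Htn; apply.
  apply: (subsetP (Z_monok (F :|: Y) (leq0n n))); by rewrite /= inE HF.
have HtY : t \notin Y by apply/negP => HY; apply: Hg; exact: gY.
apply/setUP; right; move: Ht; rewrite !inE; case: (boolP (t \in P1)) => HP.
- move=> /forallP H; apply/forallP => a; apply/implyP => Hen; move: (H a).
  rewrite Hen /= /succ_in; case E: (T t a) => [u|] // Hu.
  apply: IH => // Hgu; apply: Hg; exact: gP1 HP HtF E Hgu.
- move=> _; case: (notgood_P2 Hg HP HtF) => a [u [HSR [HT Hgu]]].
  have HW : W t by exists (K + n.+1); exact: (subsetP (Z_shift n.+1 (FY_sub HYK))).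
  case: (rank_of Htz) => r Hr Hle.
  have HFY : t \notin F :|: Y by rewrite inE negb_or HtF HtY.
  case: (SR_dec HP HFY HW Hr HSR HT) => m Hm Hlt.
  apply/existsP; exists a; rewrite /succ_in HT; apply: IH => //.
  have Hmn : m <= n by rewrite -ltnS; apply: leq_trans Hlt Hle.
  exact: (subsetP (Z_monok (F :|: Y) Hmn)) _ ((rankP _ _ _).1 Hm).1.
Qed.


Lemma good_mono (Yj : {set S}) Y K x : Yj \subset Y -> Y \subset Z F K -> good Yj x -> W x -> good Y x.
Proof.
move=> HjY HYK; elim=> {x} [x Hx | x a t HP HF HT _ IH | x HP HF _ IH] HW.
- apply: gY; exact: (subsetP HjY).
- exact: gP1 HP HF HT (IH (P1_succW HP HW HT)).
- case: (boolP (x \in Y)) => HxY; first exact: gY.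
  apply: gP2 => // a t HSR HT; apply: NNPP => Hgt.
  have HFY : x \notin F :|: Y by rewrite inE negb_or HF HxY.
  case: (W_rank (subsetUl F Y) HW) => n Hn.
  case: (SR_dec HP HFY HW Hn HSR HT) => m Hm Hlt.
  have HWt := rank_W (FY_sub HYK) Hm.
  have HtF : t \in Z F m := NG HYK ((rankP _ _ _).1 Hm).1 Hgt.
  have Htj : t \in Z (F :|: Yj) m := subsetP (Z_monoR m (subsetUl F Yj)) _ HtF.
  case: (rank_of Htj) => m' Hm' Hle'.
  case: (W_rank (subsetUl F Yj) HW) => n' Hn'.
  have Hnn' : n <= n'.
    apply: ((rankP _ _ _).1 Hn).2.
    exact: (subsetP (Z_monoR n' (setUS F HjY))) _ ((rankP _ _ _).1 Hn').1.
  have HxjF : x \notin F :|: Yj.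
    rewrite inE negb_or HF /=; apply/negP => H; by rewrite (subsetP HjY _ H) in HxY.
  have HSRj : SRActs P1 T F Yj x a.
    split; first by rewrite /enabled HT.
    move=> _; rewrite HT Hm' Hn' /=.
    by apply: leq_ltn_trans Hle' (leq_trans Hlt Hnn').
  exact: Hgt (IH a t HSRj HT HWt).
Qed.

Lemma P2_legal Y K q : Y \subset Z F K -> W q -> q \notin P1 ->
  exists a q', hatT P1 T F Y q a q' /\ W q'.
Proof.
move=> HYK HW HP; case: (boolP (q \in F :|: Y)) => HFY.
- case: (boolP (q \in F)) => HF.
  + case: (Henabled q) => a; case E: (T q a) => [t|] // _.
    exists a, t; have Ht := Hsink HF E; subst t; split => //; split => //.
    by split; [rewrite /enabled E | case=> _ [_]; rewrite HFY].
  + case: (W_rank (subxx F) HW) => n Hn.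
    case: (P2_step HP Hn HF) => a [t [HT [m Hm _]]].
    exists a, t; split; last exact: (@rank_W F 0 t m (subxx _)).
    by split => //; split; [rewrite /enabled HT | case=> _ [_]; rewrite HFY].
- case: (W_rank (subsetUl F Y) HW) => n Hn.
  case: (P2_step HP Hn HFY) => a [t [HT [m Hm Hlt]]].
  exists a, t; split; last exact: (rank_W (FY_sub HYK) Hm).
  split => //; split; first by rewrite /enabled HT.
  by move=> _; rewrite HT Hm Hn.
Qed.

Definition winning Y (R' : S -> Prop) (sigma1 : seq S -> S -> A) s :=
  forall sigma2 : seq S -> S -> A,
      legal W (hatT P1 T F Y) (fun q => q \notin P1) sigma2 ->
      forall p : nat -> S,
        p 0 = s ->
        (forall i,
           let past := [seq p j | j <- iota 0 i] in
           hatT P1 T F Y (p i) (if p i \in P1 then sigma1 past (p i) else sigma2 past (p i))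
              (p i.+1) /\ W (p i.+1)) ->
        exists i, R' (p i).

Lemma shift_win Y R' sigma1 s b t : ~ R' s -> hatT P1 T F Y s b t -> W t ->
  (s \in P1 -> sigma1 [::] s = b) -> winning Y R' sigma1 s ->
  winning Y R' (fun past q => sigma1 (s :: past) q) t.
Proof.
move=> HR Hb HWt Hs1 Hwin sigma2 Hleg p Hp0 Hstep.
pose sigma2' (past : seq S) q := match past with
  | [::] => if q == s then b else sigma2 [::] q
  | _ :: past' => sigma2 past' q end.
pose p' i := match i with 0 => s | i'.+1 => p i' end.
have Hleg' : legal W (hatT P1 T F Y) (fun q => q \notin P1) sigma2'.
  move=> [|x past] q Hq Hown /=; last exact: Hleg.
  by case: eqP => [->|_]; [exists t | exact: Hleg].
have Hstep' : forall i, let past := [seq p' j | j <- iota 0 i] in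
   hatT P1 T F Y (p' i) (if p' i \in P1 then sigma1 past (p' i) else sigma2' past (p' i))
     (p' i.+1) /\ W (p' i.+1).
  case=> [|i] /=.
  - rewrite Hp0; case: (boolP (s \in P1)) => HP; first by rewrite (Hs1 HP).
    by rewrite eqxx.
  - have Hmap : [seq p' j | j <- iota 1 i] = [seq p j | j <- iota 0 i].
      by rewrite -[1]/(1 + 0) iotaDl -map_comp; by apply: eq_map => j.
    rewrite Hmap; exact: Hstep i.
case: (Hwin sigma2' Hleg' p' erefl Hstep') => [[|i] Hi]; first by exfalso; exact: HR Hi.
by exists i.
Qed.

Lemma win_good Y K (R' : S -> Prop) m s sigma1 : Y \subset Z F K ->
  (forall q, R' q -> W q -> good Y q) -> rk (F :|: Y) s = Some m -> W s ->
  legal W (hatT P1 T F Y) (fun q => q \in P1) sigma1 -> winning Y R' sigma1 s -> good Y s.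
Proof.
move=> HYK HR'; elim/ltn_ind: m s sigma1 => m IH s sigma1 Hm HWs Hleg Hwin.
case: (classic (R' s)) => HRs; first exact: HR'.
case: (boolP (s \in Y)) => HsY; first exact: gY.
case: (boolP (s \in F)) => HsF.
  exfalso.
  pose sigma2 (past : seq S) q := choose_act (fun a => exists q', hatT P1 T F Y q a q' /\ W q') a0.
  have Hleg2 : legal W (hatT P1 T F Y) (fun q => q \notin P1) sigma2.
    move=> past q Hq HP; apply: (choose_actP (P := fun a => exists q', hatT P1 T F Y q a q' /\ W q')).
    exact: P2_legal HYK Hq HP.
  case: (Hwin sigma2 Hleg2 (fun _ => s) erefl) => [i|i Hi]; last exact: HRs Hi.
  case: (boolP (s \in P1)) => HP /=.
  - case: (Hleg [seq s | j <- iota 0 i] s HWs HP) => q' [[HSR HT] HW'].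
    by move: (HT) (HSR); rewrite (Hsink HsF HT) => HT' HSR'; split.
  - case: (Hleg2 [seq s | j <- iota 0 i] s HWs HP) => q' [[HSR HT] HW'].
    by move: (HT) (HSR); rewrite (Hsink HsF HT) => HT' HSR'; split.
have HFY : s \notin F :|: Y by rewrite inE negb_or HsF HsY.
case: (boolP (s \in P1)) => HP.
- case: (Hleg [::] s HWs HP) => t [[HSR HT] HWt].
  case: (P1_step HP Hm HFY HT) => m' Hm' Hlt.
  refine (gP1 HP HsF HT _).
  apply: (IH m' Hlt t (fun past q => sigma1 (s :: past) q)) => //.
  + by move=> past q Hq Hown; exact: Hleg.
  + exact: (shift_win HRs (conj HSR HT) HWt (fun _ => erefl)).
- refine (gP2 HP HsF _) => a t HSR HT.
  case: (SR_dec HP HFY HWs Hm HSR HT) => m' Hm' Hlt.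
  have HWt := rank_W (FY_sub HYK) Hm'.
  apply: (IH m' Hlt t (fun past q => sigma1 (s :: past) q)) => //.
  + by move=> past q Hq Hown; exact: Hleg.
  + apply: (shift_win HRs (conj HSR HT) HWt) => // H; by rewrite H in HP.
Qed.

Lemma good_sure Y K (R' : S -> Prop) s : Y \subset Z F K -> (forall q, q \in Y -> R' q) ->
  good Y s -> W s ->
  exists sigma1, legal W (hatT P1 T F Y) (fun q => q \in P1) sigma1 /\ winning Y R' sigma1 s.
Proof.
move=> HYK HYR Hg HWs; exists (fun _ q => pig Y q); split.
- move=> past q HWq HP; case E: (T q (pig Y q)) => [t|]; last by exfalso; exact: pig_en E.
  exists t; split; last exact: P1_succW HP HWq E.
  by split => //; apply: SR_P1 => //; rewrite E.
- move=> sigma2 Hleg p Hp0 Hstep.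
  case: (W_rank (subsetUl F Y) HWs) => m Hm.
  have [i Hi] : exists i, p i \in Y.
    apply: (@reach Y K m p HYK); rewrite ?Hp0 //; last by exists m.
    move=> i Hi; have [[HSR HT] _] := Hstep i; split => HP.
    + by move: HT; rewrite HP.
    + move: HSR HT; rewrite (negbTE HP) => HSR HT; by exists (sigma2 [seq p j | j <- iota 0 i] (p i)).
  by exists i; exact: HYR.
Qed.

End Pf.

Theorem proposition3 (S A : finType) (P1 : {set S}) (T : S -> A -> option S)
  (s0 : S) (F : {set S})
  (Henabled : forall s, exists a, T s a <> None)
  (Hsink : forall f a t, f \in F -> T f a = Some t -> t = f)
  (s1 s2 : S)
  (Hs1 : Win2 P1 T F s1) (Hs1F : s1 \notin F)
  (Hs2 : Win2 P1 T F s2) (Hs2F : s2 \notin F) :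
  let Y1 := [set s1] in
  let Y2 := [set s2] in
  let Y := Y1 :|: Y2 in
  forall s : S,
    (Win2 P1 T F s /\ DSWin P1 T F set0 Y s) <->
    SureWin1 P1 (Win2 P1 T F) (hatT P1 T F Y)
      (fun q => DSWin P1 T F set0 Y1 q \/ DSWin P1 T F set0 Y2 q) s.
Proof.
move=> Y1 Y2 Y s.
have [a0 _] : exists a : A, True.
  by case: (Henabled s) => a _; exists a.
case: Hs1 => k1 Hk1; case: Hs2 => k2 Hk2.
set K := maxn k1 k2.
have HYK : Y \subset Zk P1 T F K.
  rewrite subUset !sub1set; apply/andP; split.
  - exact: (subsetP (Z_monok P1 T F (leq_maxl k1 k2))).
  - exact: (subsetP (Z_monok P1 T F (leq_maxr k1 k2))).
have HY1 : Y1 \subset Y by exact: subsetUl.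
have HY2 : Y2 \subset Y by exact: subsetUr.
split.
- case=> HWs HD.
  have Hg := DS_good Henabled Hsink a0 HD.
  split => //.
  have HYR : forall q, q \in Y -> DSWin P1 T F set0 Y1 q \/ DSWin P1 T F set0 Y2 q.
    move=> q /setUP [H|H]; [left|right]; exact: (Y_DS P1 F Henabled a0 H).
  exact: (good_sure Henabled Hsink a0 HYK HYR Hg HWs).
- case=> HWs [sigma1 [Hleg Hwin]].
  split => //.
  case: (W_rank (subsetUl F Y) HWs) => m Hm.
  apply: (good_DS Henabled a0 HYK _ HWs).
  have HR' : forall q, DSWin P1 T F set0 Y1 q \/ DSWin P1 T F set0 Y2 q -> Win2 P1 T F q -> good P1 T F Y q.
    move=> q [H|H] HWq.
    + exact: (good_mono Hsink HY1 HYK (DS_good Henabled Hsink a0 H) HWq).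
    + exact: (good_mono Hsink HY2 HYK (DS_good Henabled Hsink a0 H) HWq).
  exact: (win_good Henabled Hsink a0 HYK HR' Hm HWs Hleg Hwin).
Qed.
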